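(* Let $a,b,k$ be positive integers. Define $a_1=a$, $a_2=b$, and $a_n=ka_{n-1}+a_{n-2}$ for $n\ge 3$. Let $(x_n)_{n\ge1}$ be the sequence $1,1,1,2,2,2,1,1,1,2,2,2,\ldots$ and $(y_n)_{n\ge1}$ the sequence $2,2,2,1,1,1,2,2,2,1,1,1,\ldots$ (blocks of three, alternating). (1) If $k$ is even, then the sequence $(\Gamma(a_n,a_{n+1}))_{n\ge1}$ is constant. (2) If $k$ is odd: (a) if $a$ and $b$ are both odd, then $(\Gamma(a_n,a_{n+1}))_{n\ge 3}$ equals $(x_n)_{n\ge1}$ or $(y_n)_{n\ge1}$; (b) if $a$ is odd and $b$ is even, then $(\Gamma(a_n,a_{n+1}))_{n\ge 2}$ equals $(x_n)_{n\ge1}$ or $(y_n)_{n\ge1}$; (c) if $a$ is even and $b$ is odd, then $(\Gamma(a_n,a_{n+1}))_{n\ge 1}$ equals $(x_n)_{n\ge1}$ or $(y_n)_{n\ge1}$.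
   Context: For relatively prime positive integers $p,q$, exactly one of the equations $px+qy=\frac{(p-1)(q-1)}{2}$ (Equation 1) and $px+qy+1=\frac{(p-1)(q-1)}{2}$ (Equation 2) has a solution in nonnegative integers $(x,y)$. For positive integers $a,b$ with $d=\gcd(a,b)$, $\Gamma(a,b)=1$ if Equation 1 with $(p,q)=(a/d,b/d)$ has a nonnegative integer solution, and $\Gamma(a,b)=2$ otherwise. A sequence indexed from $n\ge m$ ''equals'' $(x_n)_{n\ge1}$ means its $j$-th term (the one with index $n=m+j-1$) equals $x_j$ for all $j\ge1$. *)

(* Defs.v *)
From mathcomp Require Import all_boot.
Set Implicit Arguments. Unset Strict Implicit. Unset Printing Implicit Defensive.

Definition eq1_solvable (p q : nat) : Prop :=
  exists x y : nat, p * x + q * y = ((p - 1) * (q - 1)) %/ 2.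

(* Boolean version of eq1_solvable: for p, q >= 1 any solution has x, y <= target,
   so a bounded search is exact; equivalence proved in eq1_solvableP below. *)
Definition eq1_solvableb (p q : nat) : bool :=
  let c := ((p - 1) * (q - 1)) %/ 2 in
  [exists x : 'I_c.+1, exists y : 'I_c.+1, p * x + q * y == c].

Definition Gamma (a b : nat) : nat :=
  let d := gcdn a b in
  if eq1_solvableb (a %/ d) (b %/ d) then 1 else 2.

(* 0-indexed helper: rec a b k 0 = a, rec 1 = b, rec (n+2) = k*rec(n+1) + rec n *)
Fixpoint rec_aux (a b k n : nat) {struct n} : nat * nat :=
  match n with
  | 0 => (a, b)
  | m.+1 => let: (u, v) := rec_aux a b k m in (v, k * v + u)
  end.

Definition aseq (a b k n : nat) : nat := (rec_aux a b k n.-1).1.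

Definition xseq (j : nat) : nat := if odd ((j.-1) %/ 3) then 2 else 1.
Definition yseq (j : nat) : nat := if odd ((j.-1) %/ 3) then 1 else 2.

Lemma eq1_solvableP p q : 0 < p -> 0 < q ->
  reflect (eq1_solvable p q) (eq1_solvableb p q).
Proof.
move=> hp hq; rewrite /eq1_solvableb /eq1_solvable.
set c := _ %/ 2.
apply: (iffP existsP).
  by case=> x /existsP [y /eqP e]; exists x, y.
case=> x [y e].
have hx : x < c.+1 by rewrite ltnS -e; apply: leq_trans (leq_addr _ _); rewrite leq_pmull.
have hy : y < c.+1 by rewrite ltnS -e; apply: leq_trans (leq_addl _ _); rewrite leq_pmull.
by exists (Ordinal hx); apply/existsP; exists (Ordinal hy); rewrite e.
Qed.

Lemma aseq_1 a b k : aseq a b k 1 = a. Proof. by []. Qed.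
Lemma aseq_2 a b k : aseq a b k 2 = b. Proof. by []. Qed.
Lemma aseq_rec a b k n : 3 <= n ->
  aseq a b k n = k * aseq a b k n.-1 + aseq a b k n.-2.
Proof.
case: n => [|[|[|n]]] //= _; rewrite /aseq /=.
by case: (rec_aux a b k n) => u v /=.
Qed.

(* Main.v *)
Require Import Defs.
From mathcomp Require Import all_boot all_algebra ring zify.

Definition crit (P Q : nat) : Prop :=
  exists w t, odd w /\ w <= P /\ Q * w = 1 + P * t.

Lemma odd_ex {w} : odd w -> exists y, w = (2 * y).+1.
Proof. by move=> ow; exists w./2; rewrite -[LHS]odd_double_half ow /= -muln2 mulnC. Qed.

Lemma crit_eq1 {P Q} : odd P -> 0 < Q -> eq1_solvable P Q <-> crit P Q.
Proof.
move=> oP hQ.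
have [p' eP] := odd_ex oP.
case: Q hQ => // Q' _.
have eT : ((P - 1) * (Q'.+1 - 1)) %/ 2 = p' * Q'.
  by rewrite eP subn1 /= subn1 /= -mulnA mulKn.
rewrite /eq1_solvable /crit eT; subst P; split.
- case=> x [y e]; exists (2 * y).+1, (Q'.+1 - (2 * x).+1).
  have hm : 2 * x <= Q'.
    rewrite leqNgt; apply/negP => h.
    have : p' * Q'.+1 <= p' * (2 * x) by rewrite leq_mul2l h orbT.
    have : 0 < x by move: h; case: x {e} => //; rewrite muln0.
    move=> hx h2. have : p' * Q' < (2 * p').+1 * x + Q'.+1 * y.
      rewrite mulnS in h2.
      have : (2 * p').+1 * x = p' * (2 * x) + x by rewrite mulSn mulnCA mulnA; lia.
      lia.
    by rewrite e ltnn.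
  split; first by rewrite /= mul2n odd_double.
  split.
    rewrite ltnS leq_mul2l /=; rewrite leqNgt; apply/negP => h.
    have : Q'.+1 * p'.+1 <= Q'.+1 * y by rewrite leq_mul2l h.
    have : Q'.+1 * y <= p' * Q' by rewrite -e leq_addl.
    rewrite mulnS [Q'.+1 * p']mulnC; lia.
  have e2 : Q'.+1 * (2 * y).+1 + (2 * p').+1 * (2 * x).+1 = (2 * p').+1 * Q'.+1 + 1.
    have e2 : 2 * ((2 * p').+1 * x + Q'.+1 * y) = 2 * (p' * Q') by rewrite e.
    have -> : Q'.+1 * (2 * y).+1 + (2 * p').+1 * (2 * x).+1 = 2 * ((2 * p').+1 * x + Q'.+1 * y) + (Q' + 2 * p' + 2) by ring.
    rewrite e2; ring.
  have [z ez] : exists z, Q'.+1 = (2 * x).+1 + z by exists (Q'.+1 - (2*x).+1); rewrite subnKC.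
  rewrite ez addKn; rewrite ez in e2; apply/eqP; rewrite -(eqn_add2r ((2 * p').+1 * (2 * x).+1)).
  apply/eqP; rewrite e2; ring.
- case=> w [t [ow [wP e]]].
  have [y ey] := odd_ex ow; subst w.
  have ht : t <= Q'.
    rewrite leqNgt; apply/negP => h.
    have : (2 * p').+1 * Q'.+1 <= (2 * p').+1 * t by rewrite leq_mul2l h orbT.
    have : Q'.+1 * (2 * y).+1 <= Q'.+1 * (2 * p').+1 by rewrite leq_mul2l wP orbT.
    rewrite [Q'.+1 * _]mulnC; lia.
  have [r er0] : exists r, Q' = r + t by exists (Q' - t); rewrite subnK.
  subst Q'.
  have eR : (2 * p').+1 * r + 2 * ((r + t).+1 * y) = 2 * (p' * (r + t)).
    have e3 : (2 * p').+1 * r + 2 * ((r + t).+1 * y) + (1 + (2 * p').+1 * t) = 2 * (p' * (r + t)) + (r + t).+1 * (2 * y).+1 by ring.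
    by move/eqP: e3; rewrite -e eqn_add2r => /eqP.
  have er : ~~ odd r.
    have := congr1 odd eR; rewrite oddD !oddM /= mul2n !odd_double.
    by rewrite addbF /= => ->.
  exists r./2, y.
  have hr : r = 2 * r./2 by rewrite -[LHS]odd_double_half (negbTE er) /= -muln2 mulnC.
  move: eR; rewrite {1}hr mulnCA -mulnDr => /eqP; rewrite eqn_pmul2l //.
  by move/eqP <-; rewrite mulnC.
Qed.

Lemma eq1_sym p q : eq1_solvable p q <-> eq1_solvable q p.
Proof.
rewrite /eq1_solvable mulnC.
by split; case=> x [y e]; exists y, x; rewrite addnC.
Qed.

Lemma crit_addP {P Q} : 0 < Q -> crit P Q <-> crit P (Q + P).
Proof.
move=> hQ; split; case=> w [t [ow [wP e]]].
- exists w, (t + w); do 2!split => //.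
  by rewrite mulnDl e mulnDr addnA [P * w]mulnC.
- have hw : w <= t.
    rewrite leqNgt; apply/negP => h.
    have : P * t.+1 <= P * w by rewrite leq_mul2l h orbT.
    have : 0 < Q * w by rewrite muln_gt0 hQ; case: (w) ow.
    move: e; rewrite mulnDl [P * w]mulnC mulnS. lia.
  exists w, (t - w); do 2!split => //.
  have : P * t = P * (t - w) + w * P by rewrite [w * P]mulnC -mulnDr subnK.
  move: e; rewrite mulnDl; lia.
Qed.

Lemma uniq_inv {p m a b t1 t2} : coprime p m -> a <= m -> b <= m ->
  p * a = 1 + m * t1 -> p * b = 1 + m * t2 -> a = b.
Proof.
move=> cp.
wlog hab : a b t1 t2 / a <= b.
  move=> W ha hb e1 e2; case: (leqP a b) => h; first exact: W e1 e2.
  by apply/esym/(W b a t2 t1) => //; apply: ltnW.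
move=> ha hb e1 e2.
have a0 : 0 < a by case: a e1 {ha hab} => //; rewrite muln0.
have ht : t1 <= t2.
  have : p * a <= p * b by rewrite leq_mul2l hab orbT.
  rewrite e1 e2 leq_add2l => h.
  case: m {cp hb e1 e2} ha h => [|m] ha; first by lia.
  by rewrite leq_mul2l.
have e : p * (b - a) = m * (t2 - t1) by rewrite !mulnBr e1 e2 subnDl.
have hd : m %| b - a.
  have cm : coprime m p by rewrite coprime_sym.
  by rewrite -(Gauss_dvdr _ cm) e dvdn_mulr.
apply/eqP; rewrite eqn_leq hab /= leqNgt; apply/negP => hlt.
have : m <= b - a by apply: dvdn_leq; rewrite ?subn_gt0.
lia.
Qed.

Lemma exists_inv {p q} : 0 < p -> 0 < q -> coprime p q ->
  exists v t, 0 < v /\ v <= q /\ p * v = 1 + q * t.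
Proof.
move=> hp hq cp.
have [a ha hd] := Bezoutl p hq.
have g1 : gcdn q p = 1 by rewrite gcdnC; apply/eqP.
rewrite g1 in hd; case/dvdnP: hd => s es.
have hs : s <= p.
  rewrite leqNgt; apply/negP => h.
  have : q * p.+1 <= q * s by rewrite leq_mul2l h orbT.
  have : a * p <= (q - 1) * p by rewrite leq_mul2r; lia.
  rewrite mulnBl mul1n mulnS [s * q]mulnC in es *; lia.
have [v ev] : exists v, q = a + v by exists (q - a); rewrite subnKC // ltnW.
have [u eu] : exists u, p = s + u by exists (p - s); rewrite subnKC.
exists v, u; split; first by lia.
split; first by lia.
have e1 : p * v + p * a = 1 + q * u + p * a.
  have : p * v + p * a = s * q + u * q by rewrite -mulnDr addnC -ev eu mulnDl.
  rewrite -es => ->; rewrite [u * q]mulnC; ring.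
by move/eqP: e1; rewrite eqn_add2r => /eqP.
Qed.

Lemma crit_flip {p q} : 0 < p -> ~~ odd p -> odd q -> coprime p q ->
  crit q p <-> ~ crit (p + q) p.
Proof.
move=> hp ep oq cp.
have hq : 0 < q by case: (q) oq.
have [v0 [t0 [v0p [v0q e0]]]] := exists_inv hp hq cp.
have ht0 : t0 < p.
  rewrite ltnNge; apply/negP => h.
  have : q * p <= q * t0 by rewrite leq_mul2l h orbT.
  have : p * v0 <= p * q by rewrite leq_mul2l v0q orbT.
  rewrite [q * p]mulnC; lia.
have ot0 : odd t0.
  have := congr1 odd e0; rewrite oddD !oddM (negbTE ep) /= oq /=.
  by case: (odd t0).
have e0' : p * (v0 + t0) = 1 + (p + q) * t0.
  by rewrite mulnDr e0 mulnDl; ring.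
have cp' : coprime p (p + q) by rewrite /coprime gcdnDl.
split.
- case=> w1 [t1 [ow1 [w1q e1]]] [w2 [t2 [ow2 [w2q e2]]]].
  have := uniq_inv cp w1q v0q e1 e0 => h1.
  have : v0 + t0 <= p + q by lia.
  move=> hw0; have := uniq_inv cp' w2q hw0 e2 e0' => h2.
  by move: ow2; rewrite h2 oddD -h1 ow1 ot0.
- move=> nc; exists v0, t0; split => //.
  case ov: (odd v0) => //; exfalso; apply: nc; exists (v0 + t0), t0; split.
    by rewrite oddD ot0 ov.
  split; [lia | done].
Qed.

Lemma flipb {p q} : 0 < p -> 0 < q -> coprime p q ->
  eq1_solvableb p (q + p) = (~~ odd p) (+) eq1_solvableb p q.
Proof.
move=> hp hq cp.
have hqp : 0 < q + p by rewrite addn_gt0 hq.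
case op: (odd p) => /=.
  apply/eq1_solvableP/eq1_solvableP => //.
  - by move/(crit_eq1 op hqp)/(crit_addP hq)/(crit_eq1 op hq).
  - by move/(crit_eq1 op hq)/(crit_addP hq)/(crit_eq1 op hqp).
have oq : odd q.
  apply/negPn/negP => eq; have : 2 %| gcdn p q by rewrite dvdn_gcd !dvdn2 op eq.
  by rewrite (eqP cp).
have oqp : odd (q + p) by rewrite oddD op oq.
have F := crit_flip hp (negbT op) oq cp.
have A : eq1_solvable p (q + p) <-> crit (p + q) p.
  by rewrite eq1_sym (crit_eq1 oqp hp) [q + p]addnC.
have B : eq1_solvable p q <-> crit q p.
  by rewrite eq1_sym (crit_eq1 oq hp).
case: (eq1_solvableP hp hqp) => h1; case: (eq1_solvableP hp hq) => h2 //=.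
- by exfalso; move/B/F: h2; apply; apply/A.
- by exfalso; apply: h2; apply/B/F => hc; apply: h1; apply/A.
Qed.

Lemma flipk p q k : 0 < p -> 0 < q -> coprime p q ->
  eq1_solvableb p (q + k * p) = (odd k && ~~ odd p) (+) eq1_solvableb p q.
Proof.
move=> hp hq cp; elim: k => [|k IH]; first by rewrite mul0n addn0.
have hq' : 0 < q + k * p by rewrite addn_gt0 hq.
have cp' : coprime p (q + k * p) by rewrite /coprime addnC gcdnMDl.
rewrite mulSn addnCA addnC (flipb hp hq' cp') IH /=.
by case: (odd k); case: (odd p); case: (eq1_solvableb p q).
Qed.

Lemma rec_step a b k n :
  rec_aux a b k n.+1 = ((rec_aux a b k n).2, k * (rec_aux a b k n).2 + (rec_aux a b k n).1).
Proof. by rewrite /=; case: (rec_aux a b k n). Qed.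

Lemma rec_scale d a b k n :
  rec_aux (d * a) (d * b) k n = (d * (rec_aux a b k n).1, d * (rec_aux a b k n).2).
Proof.
elim: n => [|n IH] //; rewrite !rec_step IH /=; congr pair; ring.
Qed.

Lemma rec_pos {a b} k n : 0 < a -> 0 < b ->
  0 < (rec_aux a b k n).1 /\ 0 < (rec_aux a b k n).2.
Proof.
move=> ha hb; elim: n => [|n [h1 h2]] //; rewrite rec_step /=; split => //.
by rewrite addn_gt0 h1 orbT.
Qed.

Lemma rec_cop a b k n : coprime a b ->
  coprime (rec_aux a b k n).1 (rec_aux a b k n).2.
Proof.
move=> cab; elim: n => [|n IH] //; rewrite rec_step /=.
by rewrite /coprime gcdnMDl gcdnC.
Qed.

Lemma divS3 i : odd (i.+1 %/ 3) = (i.+1 %% 3 == 0) (+) odd (i %/ 3).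
Proof.
have -> : i.+1 %/ 3 = i %/ 3 + (i.+1 %% 3 == 0).
  case h: (i.+1 %% 3 == 0); move/eqP: h => h /=; lia.
by rewrite oddD addbC; case: (_ == _).
Qed.

Lemma blocks (f : nat -> bool) base :
  (forall i, f (i.+1 + base) = (i.+1 %% 3 == 0) (+) f (i + base)) ->
  forall i, f (i + base) = odd (i %/ 3) (+) f base.
Proof.
move=> H; elim=> [|i IH]; first by rewrite div0n.
by rewrite H IH divS3 addbA.
Qed.

Lemma final (f : nat -> bool) base (G : nat -> nat) :
  (forall j, 1 <= j -> G j = if f (j.-1 + base) then 1 else 2) ->
  (forall i, f (i.+1 + base) = (i.+1 %% 3 == 0) (+) f (i + base)) ->
  (forall j, 1 <= j -> G j = xseq j) \/ (forall j, 1 <= j -> G j = yseq j).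
Proof.
move=> HG H; have B := blocks _ _ H.
case hb: (f base); [left | right] => j hj; rewrite HG // B hb /xseq /yseq;
  by case: (odd _).
Qed.

Lemma period3 (o : nat -> bool) : (forall m, o m.+2 = o m.+1 (+) o m) ->
  forall m, o m = o (m %% 3).
Proof.
move=> H; elim/ltn_ind => m IH.
case: (ltnP m 3) => h; first by rewrite modn_small.
case: m h IH => [|[|[|n]]] // _ IH.
have -> : o n.+3 = o n by rewrite !H; case: (o _); case: (o _).
rewrite IH //; lia.
Qed.

Lemma eqb_sym {p q} : 0 < p -> 0 < q -> eq1_solvableb p q = eq1_solvableb q p.
Proof.
by move=> hp hq; apply/eq1_solvableP/eq1_solvableP => //; move/eq1_sym.
Qed.

Lemma Gamma_scale d p q : 0 < d -> coprime p q ->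
  Gamma (d * p) (d * q) = if eq1_solvableb p q then 1 else 2.
Proof.
by move=> d0 cp; rewrite /Gamma -muln_gcdr (eqP cp) muln1 !mulKn.
Qed.

Lemma mod3_cases (P : nat -> Prop) n : P 0 -> P 1 -> P 2 -> P (n %% 3).
Proof.
move=> h0 h1 h2; have : n %% 3 < 3 by rewrite ltn_pmod.
by case: (n %% 3) => [|[|[|r]]].
Qed.

Theorem corollary5p3 (a b k : nat) (ha : 0 < a) (hb : 0 < b) (hk : 0 < k) :
  (~~ odd k ->
     forall n, 1 <= n -> Gamma (aseq a b k n) (aseq a b k n.+1)
                        = Gamma (aseq a b k 1) (aseq a b k 2)) /\
  (odd k ->
     (odd a -> odd b ->
        (forall j, 1 <= j -> Gamma (aseq a b k (j + 2)) (aseq a b k (j + 3)) = xseq j) \/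
        (forall j, 1 <= j -> Gamma (aseq a b k (j + 2)) (aseq a b k (j + 3)) = yseq j)) /\
     (odd a -> ~~ odd b ->
        (forall j, 1 <= j -> Gamma (aseq a b k (j + 1)) (aseq a b k (j + 2)) = xseq j) \/
        (forall j, 1 <= j -> Gamma (aseq a b k (j + 1)) (aseq a b k (j + 2)) = yseq j)) /\
     (~~ odd a -> odd b ->
        (forall j, 1 <= j -> Gamma (aseq a b k j) (aseq a b k j.+1) = xseq j) \/
        (forall j, 1 <= j -> Gamma (aseq a b k j) (aseq a b k j.+1) = yseq j))).
Proof.
have [d [a' [b' [d0 [ea [eb cop]]]]]] :
    exists d a' b', 0 < d /\ a = d * a' /\ b = d * b' /\ coprime a' b'.
  have d0 : 0 < gcdn a b by rewrite gcdn_gt0 ha.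
  have ea : a = gcdn a b * (a %/ gcdn a b) by rewrite mulnC divnK // dvdn_gcdl.
  have eb : b = gcdn a b * (b %/ gcdn a b) by rewrite mulnC divnK // dvdn_gcdr.
  exists (gcdn a b), (a %/ gcdn a b), (b %/ gcdn a b); do 3!split => //.
  have : gcdn a b * gcdn (a %/ gcdn a b) (b %/ gcdn a b) = gcdn a b * 1.
    by rewrite muln_gcdr -ea -eb muln1.
  by move/eqP; rewrite eqn_pmul2l // => /eqP.
subst a b.
have a0 : 0 < a' by move: ha; rewrite muln_gt0 => /andP[].
have b0 : 0 < b' by move: hb; rewrite muln_gt0 => /andP[].
pose R := rec_aux a' b' k.
pose s m := eq1_solvableb (R m).1 (R m).2.
have Hg : forall m, Gamma (aseq (d * a') (d * b') k m.+1) (aseq (d * a') (d * b') k m.+2)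
                    = if s m then 1 else 2.
  move=> m; rewrite /aseq -/(rec_aux _ _ k m.+1) (rec_step _ _ k m) /= rec_scale /=.
  by rewrite Gamma_scale // rec_cop.
have Hs : forall m, s m.+1 = (odd k && ~~ odd (R m).2) (+) s m.
  move=> m; rewrite /s /R rec_step /= addnC.
  have [p1 p2] := rec_pos k m a0 b0 : 0 < (rec_aux a' b' k m).1 /\ _.
  rewrite flipk //; last by rewrite coprime_sym rec_cop.
  by rewrite (eqb_sym p2 p1).
split.
  move=> ek n; case: n => // m _; rewrite (Hg m) (Hg 0).
  suff -> : s m = s 0 by [].
  by elim: m => [|m IH] //; rewrite Hs (negbTE ek).
move=> ok.
pose o m := odd (R m).1.
have Ho : forall m, o m.+2 = o m.+1 (+) o m.
  by move=> m; rewrite /o /R !rec_step /= oddD oddM ok.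
have P := period3 _ Ho.
have Hs' : forall m, s m.+1 = (~~ o m.+1) (+) s m.
  by move=> m; rewrite Hs ok /o /R rec_step.
have o0 : o 0 = odd a' by [].
have o1 : o 1 = odd b' by [].
have o2 : o 2 = odd b' (+) odd a' by rewrite Ho.
split; [|split].
- rewrite !oddM => /andP [od oa] /andP [_ ob].
  apply: (final s 2
     (fun j => Gamma (aseq (d * a') (d * b') k (j + 2)) (aseq (d * a') (d * b') k (j + 3)))).
    move=> j; case: j => // i _ /=.
    have -> : i.+1 + 2 = (i + 2).+1 by lia.
    have -> : i.+1 + 3 = (i + 2).+2 by lia.
    exact: Hg.
  move=> i; have -> : i.+1 + 2 = (i + 2).+1 by lia.
  rewrite Hs'; congr addb.
  have -> : (i.+1 %% 3 == 0) = ((i + 2).+1 %% 3 == 2) by apply/eqP/eqP; lia.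
  rewrite P; have : (i + 2).+1 %% 3 < 3 := ltn_pmod _ (isT : 0 < 3).
  case: (_ %% 3) => [|[|[|r]]] // _; by rewrite ?o0 ?o1 ?o2 ?oa ?ob.
- rewrite !oddM => /andP [od oa] ob; rewrite od /= in ob.
  apply: (final s 1
     (fun j => Gamma (aseq (d * a') (d * b') k (j + 1)) (aseq (d * a') (d * b') k (j + 2)))).
    move=> j; case: j => // i _ /=.
    have -> : i.+1 + 1 = (i + 1).+1 by lia.
    have -> : i.+1 + 2 = (i + 1).+2 by lia.
    exact: Hg.
  move=> i; have -> : i.+1 + 1 = (i + 1).+1 by lia.
  rewrite Hs'; congr addb.
  have -> : (i.+1 %% 3 == 0) = ((i + 1).+1 %% 3 == 1) by apply/eqP/eqP; lia.
  rewrite P; have : (i + 1).+1 %% 3 < 3 := ltn_pmod _ (isT : 0 < 3).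
  case: (_ %% 3) => [|[|[|r]]] // _; by rewrite ?o0 ?o1 ?o2 ?oa ?(negbTE ob).
- rewrite !oddM => oa /andP [od ob]; rewrite od /= in oa.
  apply: (final s 0
     (fun j => Gamma (aseq (d * a') (d * b') k j) (aseq (d * a') (d * b') k j.+1))).
    move=> j; case: j => // i _ /=; rewrite addn0; exact: Hg.
  move=> i; rewrite !addn0 Hs'; congr addb.
  rewrite P; have : i.+1 %% 3 < 3 := ltn_pmod _ (isT : 0 < 3).
  case: (_ %% 3) => [|[|[|r]]] // _; by rewrite ?o0 ?o1 ?o2 ?(negbTE oa) ?ob.
Qed.
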